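(* Let $R$ be a commutative graded ring, $P$ a homogeneous prime ideal, $S=h(R\setminus P)$ and $M$ a graded $R$-module. Then $(S^{-1}M)_0=0$ if and only if $\mathrm{Hom}_{Gr(R)}(M,E^g(R/P))=0$.
   Context: $h(R\setminus P)$ is the set of homogeneous elements of $R$ not in $P$; $S^{-1}M$ is the graded localisation and $(S^{-1}M)_0$ its degree-zero component. $Gr(R)$ is the category of graded $R$-modules with degree-preserving maps and $E^g$ the injective envelope in $Gr(R)$. *)

(* Defs.v *)
(* Z-graded commutative rings and graded modules, encoded by
   predicates picking out the homogeneous components. *)
From HB Require Import structures.
From mathcomp Require Import all_boot all_order all_algebra.
Set Implicit Arguments. Unset Strict Implicit. Unset Printing Implicit Defensive.
Import GRing.Theory.
Local Open Scope ring_scope.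

(* G n = the degree-n homogeneous component (an additive subgroup); V is the
   internal direct sum of the G n, n : int. *)
Definition is_grading (V : zmodType) (G : int -> V -> Prop) : Prop :=
  [/\ forall n, G n 0 /\ (forall x y, G n x -> G n y -> G n (x - y)),
      forall x : V, exists (s : seq int) (f : int -> V),
        [/\ uniq s, forall n, G n (f n) & x = \sum_(n <- s) f n]
    & forall (s : seq int) (f : int -> V), uniq s -> (forall n, G n (f n)) ->
        \sum_(n <- s) f n = 0 -> forall n, n \in s -> f n = 0 ].

Definition closed_under_components (V : zmodType) (G : int -> V -> Prop)
  (X : V -> Prop) : Prop :=
  forall (x : V) (s : seq int) (f : int -> V), X x -> uniq s ->
    (forall n, G n (f n)) -> x = \sum_(n <- s) f n -> forall n, n \in s -> X (f n).

Definition graded_ring (R : comNzRingType) (RG : int -> R -> Prop) : Prop :=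
  [/\ is_grading RG, RG 0 1 &
      forall m n (a b : R), RG m a -> RG n b -> RG (m + n)%R (a * b)].

Definition graded_module (R : comNzRingType) (RG : int -> R -> Prop)
  (M : lmodType R) (MG : int -> M -> Prop) : Prop :=
  is_grading MG /\
  forall m n (a : R) (x : M), RG m a -> MG n x -> MG (m + n)%R (a *: x).

Definition homogeneous_prime (R : comNzRingType) (RG : int -> R -> Prop)
  (P : R -> Prop) : Prop :=
  [/\ P 0, forall x y, P x -> P y -> P (x + y) & forall a x, P x -> P (a * x)] /\
  [/\ ~ P 1, forall x y, P (x * y) -> P x \/ P y & closed_under_components RG P].

Definition hS (R : comNzRingType) (RG : int -> R -> Prop) (P : R -> Prop) (s : R) : Prop :=
  (exists n, RG n s) /\ ~ P s.

(* (S^{-1} M)_0 = 0.  (S^{-1}M)_0 consists of the fractions m/s with s in S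
   homogeneous of degree e and m in M_e; m/s = 0 in S^{-1}M iff t m = 0 for
   some t in S. *)
Definition loc0_zero (R : comNzRingType) (RG : int -> R -> Prop) (P : R -> Prop)
  (M : lmodType R) (MG : int -> M -> Prop) : Prop :=
  forall (e : int) (m : M) (s : R), MG e m -> hS RG P s -> RG e s ->
    exists t, hS RG P t /\ t *: m = 0.

Definition gr_hom (R : comNzRingType) (A B : lmodType R)
  (AG : int -> A -> Prop) (BG : int -> B -> Prop) (f : A -> B) : Prop :=
  (forall (a : R) (u v : A), f (a *: u + v) = a *: f u + f v) /\
  (forall n x, AG n x -> BG n (f x)).

Definition gr_injective (R : comNzRingType) (RG : int -> R -> Prop)
  (E : lmodType R) (EG : int -> E -> Prop) : Prop :=
  forall (A B : lmodType R) (AG : int -> A -> Prop) (BG : int -> B -> Prop)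
         (j : A -> B) (g : A -> E),
    graded_module RG AG -> graded_module RG BG ->
    gr_hom AG BG j -> injective j -> gr_hom AG EG g ->
    exists h : B -> E, gr_hom BG EG h /\ (forall x, h (j x) = g x).

Definition gr_submodule (R : comNzRingType) (E : lmodType R)
  (EG : int -> E -> Prop) (N : E -> Prop) : Prop :=
  [/\ N 0, forall x y, N x -> N y -> N (x + y),
      forall (a : R) x, N x -> N (a *: x)
    & closed_under_components EG N].

(* (E, i) is an injective envelope of R/P in Gr(R): the graded monomorphism
   R/P -> E is represented by the degree-preserving R-linear map i : R -> E
   with kernel exactly P; E is injective in Gr(R) and i(R) is essential in E
   with respect to graded submodules. *)
Definition gr_envelope_of_quot (R : comNzRingType) (RG : int -> R -> Prop)
  (P : R -> Prop) (E : lmodType R) (EG : int -> E -> Prop) (i : R -> E) : Prop :=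
  [/\ (forall (a u v : R), i (a * u + v) = a *: i u + i v),
      (forall n x, RG n x -> EG n (i x)),
      (forall x, i x = 0 <-> P x),
      gr_injective RG EG
    & forall N : E -> Prop, gr_submodule EG N ->
        (forall x, N x -> (exists r, x = i r) -> x = 0) ->
        forall x, N x -> x = 0].

(* Main.v *)
Require Import Defs.
From HB Require Import structures.
From mathcomp Require Import all_boot all_order all_algebra.
From mathcomp Require Import boolp.
From Stdlib Require Import Classical ClassicalEpsilon.
Set Implicit Arguments. Unset Strict Implicit. Unset Printing Implicit Defensive.
Import GRing.Theory.
Local Open Scope ring_scope.

Lemma gr0 (V : zmodType) (G : int -> V -> Prop) (HG : is_grading G) n : G n 0.
Proof. by case: HG => H _ _; case: (H n). Qed.

Lemma grB (V : zmodType) (G : int -> V -> Prop) (HG : is_grading G) n x y :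
  G n x -> G n y -> G n (x - y).
Proof. by case: HG => H _ _; case: (H n) => _; apply. Qed.

Lemma grN (V : zmodType) (G : int -> V -> Prop) (HG : is_grading G) n x :
  G n x -> G n (- x).
Proof. move=> Hx; rewrite -sub0r; apply: grB => //; exact: gr0. Qed.

Lemma sum_restrict (V : zmodType) (s1 s : seq int) (f : int -> V) :
  uniq s1 -> uniq s -> {subset s1 <= s} ->
  \sum_(n <- s) (if n \in s1 then f n else 0) = \sum_(n <- s1) f n.
Proof.
move=> u1 u sub; rewrite -big_mkcond -big_filter; apply: perm_big.
apply: uniq_perm; first exact: filter_uniq.
  by [].
by move=> x; rewrite mem_filter; case: (boolP (x \in s1)) => // /sub ->.
Qed.

Lemma decomp_unique (V : zmodType) (G : int -> V -> Prop) (HG : is_grading G)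
  s1 f1 s2 f2 : uniq s1 -> uniq s2 -> (forall n, G n (f1 n)) -> (forall n, G n (f2 n)) ->
  \sum_(n <- s1) f1 n = \sum_(n <- s2) f2 n ->
  forall n, (if n \in s1 then f1 n else 0) = (if n \in s2 then f2 n else 0).
Proof.
move=> u1 u2 G1 G2 E n.
set s := undup (s1 ++ s2).
have us : uniq s by exact: undup_uniq.
set g := fun k => (if k \in s1 then f1 k else 0) - (if k \in s2 then f2 k else 0).
have Gg : forall k, G k (g k).
  move=> k; rewrite /g; apply: grB => //; case: ifP => _ //; exact: gr0.
have Sg : \sum_(k <- s) g k = 0.
  rewrite /g sumrB sum_restrict // ?sum_restrict // ?E ?subrr //.
    by move=> x; rewrite mem_undup mem_cat => ->; rewrite orbT.
  by move=> x; rewrite mem_undup mem_cat => ->.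
case: HG => _ _ Hu.
case: (boolP (n \in s)) => ns.
  by apply/eqP; rewrite -subr_eq0; apply/eqP; exact: (Hu s g us Gg Sg n ns).
move: ns; rewrite mem_undup mem_cat negb_or => /andP[/negPf -> /negPf ->] //.
Qed.

Lemma sum_ind (V : zmodType) (P : V -> Prop) (s : seq int) (f : int -> V) :
  P 0 -> (forall x y, P x -> P y -> P (x + y)) -> (forall n, n \in s -> P (f n)) ->
  P (\sum_(n <- s) f n).
Proof.
move=> P0 PD; elim: s => [|a s IH] Hs; first by rewrite big_nil.
rewrite big_cons; apply: PD; first by apply: Hs; rewrite mem_head.
by apply: IH => n ns; apply: Hs; rewrite in_cons ns orbT.
Qed.

Lemma scale_decomp (R : comNzRingType) (M : lmodType R) (u : seq int) (q : int -> R)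
  (m : M) (e : int) :
  (\sum_(j <- u) q j) *: m = \sum_(n <- map (fun j => j + e) u) q (n - e) *: m.
Proof.
rewrite big_map scaler_suml; apply: eq_bigr => j _; by rewrite addrK.
Qed.

Lemma map_shift_uniq (u : seq int) (e : int) : uniq u -> uniq (map (fun j => j + e) u).
Proof. move=> uu; rewrite map_inj_uniq // => a b; exact: addIr. Qed.

Lemma hom0 (R : comNzRingType) (A B : lmodType R) (f : A -> B) :
  (forall (a : R) (u v : A), f (a *: u + v) = a *: f u + f v) -> f 0 = 0.
Proof.
move=> Hf; have := Hf 1 0 0; rewrite !scale1r !addr0 => /(congr1 (fun z => z - f 0)).
by rewrite /= subrr addrK => ->.
Qed.

Lemma homD (R : comNzRingType) (A B : lmodType R) (f : A -> B) :
  (forall (a : R) (u v : A), f (a *: u + v) = a *: f u + f v) -> forall u v, f (u + v) = f u + f v.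
Proof. by move=> Hf u v; have := Hf 1 u v; rewrite !scale1r. Qed.

Lemma homZ (R : comNzRingType) (A B : lmodType R) (f : A -> B) :
  (forall (a : R) (u v : A), f (a *: u + v) = a *: f u + f v) -> forall a u, f (a *: u) = a *: f u.
Proof. by move=> Hf a u; have := Hf a u 0; rewrite addr0 (hom0 Hf) addr0. Qed.

Lemma iD (R : comNzRingType) (E : lmodType R) (i : R -> E) :
  (forall (a u v : R), i (a * u + v) = a *: i u + i v) -> forall u v, i (u + v) = i u + i v.
Proof. by move=> Hi u v; have := Hi 1 u v; rewrite mul1r scale1r. Qed.

Lemma iM (R : comNzRingType) (E : lmodType R) (i : R -> E) :
  (forall (a u v : R), i (a * u + v) = a *: i u + i v) -> forall a u, i (a * u) = a *: i u.
Proof.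
move=> Hi a u; have h0 : i 0 = 0.
  have := Hi 1 0 0; rewrite !mul1r !scale1r !addr0 => /(congr1 (fun z => z - i 0)).
  by rewrite /= subrr addrK => ->.
by have := Hi a u 0; rewrite addr0 h0 addr0.
Qed.

Lemma i_sum (R : comNzRingType) (E : lmodType R) (i : R -> E) :
  (forall (a u v : R), i (a * u + v) = a *: i u + i v) ->
  forall (t : seq int) (g : int -> R), i (\sum_(n <- t) g n) = \sum_(n <- t) i (g n).
Proof.
move=> Hi; have h0 : i 0 = 0.
  have := Hi 1 0 0; rewrite !mul1r !scale1r !addr0 => /(congr1 (fun z => z - i 0)).
  by rewrite /= subrr addrK => ->.
move=> t g; elim: t => [|a t IH]; first by rewrite !big_nil.
by rewrite !big_cons (iD Hi) IH.
Qed.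

Lemma dir1 (R : comNzRingType) (RG : int -> R -> Prop)
  (HR : graded_ring RG) (P : R -> Prop) (HP : homogeneous_prime RG P)
  (M : lmodType R) (MG : int -> M -> Prop) (HM : graded_module RG MG)
  (E : lmodType R) (EG : int -> E -> Prop) (HE : graded_module RG EG)
  (i : R -> E) (Hi : gr_envelope_of_quot RG P EG i) :
  loc0_zero RG P MG ->
  (forall h : M -> E, gr_hom MG EG h -> forall x, h x = 0).
Proof.
move=> L h [hlin hdeg] x.
case: HR => HRg HR1 HRM.
case: HM => HMg HMZ.
case: HE => HEg HEZ.
case: HP => [[P0 PD PM] [NP1 Pprime Pcomp]].
case: Hi => ilin ideg iker _ iess.
have [s [f [us Gf ->]]] : exists s f, [/\ uniq s, forall n, MG n (f n) & x = \sum_(n <- s) f n].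
  by case: HMg => _ H _; apply: H.
apply: (@sum_ind _ (fun z => h z = 0)); first exact: hom0 hlin.
  by move=> a b ha hb; rewrite (homD hlin) ha hb addr0.
move=> e _; move: (f e) (Gf e) => {x s f us Gf} m Hm.
set y := h m.
have Hy : EG e y by apply: hdeg.
apply: NNPP => ny.
pose N := fun z : E => exists r : R, z = r *: y.
have NS : gr_submodule EG N.
  split.
  - by exists 0; rewrite scale0r.
  - by move=> _ _ [a ->] [b ->]; exists (a + b); rewrite scalerDl.
  - by move=> a _ [b ->]; exists (a * b); rewrite scalerA.
  move=> z s f [r ->] us Gf Ez n ns.
  have [u [q [uu Gq Er]]] : exists u q, [/\ uniq u, forall n, RG n (q n) & r = \sum_(n <- u) q n].
    by case: HRg => _ H _; apply: H.
  have := decomp_unique HEg (f2 := fun k => q (k - e) *: y) us (map_shift_uniq e uu) Gf _ _ n.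
  rewrite ns => ->.
  - by case: ifP => _; [exists (q (n - e)) | exists 0; rewrite scale0r].
  - by move=> k; have := HEZ _ _ _ _ (Gq (k - e)) Hy; rewrite subrK.
  by rewrite -Ez Er (scale_decomp _ _ _ e).
have [z [Nz [[a za] nz]]] : exists z, N z /\ (exists a, z = i a) /\ z <> 0.
  apply: NNPP => H; apply: ny.
  apply: (iess N NS) => [w Nw iw|]; last by exists 1; rewrite scale1r.
  by apply: NNPP => nw; apply: H; exists w.
case: Nz => r zr.
have nPa : ~ P a by move=> Pa; apply: nz; rewrite za; apply/iker.
have [t [g [ut Gg Ea]]] : exists u q, [/\ uniq u, forall n, RG n (q n) & a = \sum_(n <- u) q n].
  by case: HRg => _ H _; apply: H.
have [u [q [uu Gq Er]]] : exists u q, [/\ uniq u, forall n, RG n (q n) & r = \sum_(n <- u) q n].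
  by case: HRg => _ H _; apply: H.
have [k kt nPk] : exists2 k, k \in t & ~ P (g k).
  apply: NNPP => H; apply: nPa; rewrite Ea; apply: sum_ind => //.
  by move=> n nt; apply: NNPP => nP; apply: H; exists n.
have iEk : forall n, EG n (i (g n)) by move=> n; apply: ideg.
have Gqy : forall n, EG n (q (n - e) *: y).
  by move=> n; have := HEZ _ _ _ _ (Gq (n - e)) Hy; rewrite subrK.
have Esum : \sum_(n <- t) i (g n) = \sum_(n <- [seq j + e | j <- u]) q (n - e) *: y.
  by rewrite -(scale_decomp _ _ _ e) -Er -zr za Ea (i_sum ilin).
have := decomp_unique HEg ut (map_shift_uniq e uu) iEk Gqy Esum k.
rewrite kt.
have ik0 : i (g k) <> 0 by move/iker.
case: ifP => _; last by [].
move=> ik.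
have Hm' : MG k (q (k - e) *: m) by have := HMZ _ _ _ _ (Gq (k - e)) Hm; rewrite subrK.
have [t0 [[_ nPt0] t0m]] := L k _ (g k) Hm' (conj (ex_intro _ k (Gg k)) nPk) (Gg k).
have : h (t0 *: (q (k - e) *: m)) = 0 by rewrite t0m (hom0 hlin).
rewrite !(homZ hlin) -/y -ik -(iM ilin) => /iker /Pprime [] //.
Qed.

Definition pRm (R : comNzRingType) (M : lmodType R) (m : M) : pred M :=
  fun x => `[< exists r : R, x = r *: m >].

Lemma pRm_closed (R : comNzRingType) (M : lmodType R) (m : M) : submod_closed (R:=R) (pRm m).
Proof.
split.
  by apply/asboolP; exists 0; rewrite scale0r.
move=> a u v /asboolP[r ->] /asboolP[q ->]; apply/asboolP; exists (a * r + q).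
by rewrite scalerDl scalerA.
Qed.

HB.instance Definition _ (R : comNzRingType) (M : lmodType R) (m : M) :=
  GRing.isSubmodClosed.Build R M (pRm m) (pRm_closed m).
HB.instance Definition _ (R : comNzRingType) (M : lmodType R) (m : M) :=
  [SubChoice_isSubLmodule of {x : M | pRm m x} by <:].

Definition mkA (R : comNzRingType) (M : lmodType R) (m : M) (r : R) : {x : M | pRm m x} :=
  exist _ (r *: m) (introT (asboolP _) (ex_intro _ r erefl)).

Lemma val_sum (R : comNzRingType) (M : lmodType R) (m : M) (s : seq int)
  (f : int -> {x : M | pRm m x}) : val (\sum_(n <- s) f n) = \sum_(n <- s) val (f n).
Proof. by elim: s => [|a s IH]; rewrite ?big_nil ?big_cons //= -IH. Qed.

Lemma dir2 (R : comNzRingType) (RG : int -> R -> Prop)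
  (HR : graded_ring RG) (P : R -> Prop) (HP : homogeneous_prime RG P)
  (M : lmodType R) (MG : int -> M -> Prop) (HM : graded_module RG MG)
  (E : lmodType R) (EG : int -> E -> Prop) (HE : graded_module RG EG)
  (i : R -> E) (Hi : gr_envelope_of_quot RG P EG i) :
  (forall h : M -> E, gr_hom MG EG h -> forall x, h x = 0) -> loc0_zero RG P MG.
Proof.
move=> H0 e m s Hm Ss Gs.
apply: NNPP => nt.
have HR' := HR; have HM' := HM.
case: HR => HRg HR1 HRM.
case: HM => HMg HMZ.
case: HP => [[P0 PD PM] [NP1 Pprime Pcomp]].
case: Hi => ilin ideg iker Einj iess.
have decR : forall r : R, exists u q, [/\ uniq u, forall n, RG n (q n) & r = \sum_(n <- u) q n].
  by case: HRg => _ H _; apply: H.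
have Gqm : forall (q : int -> R), (forall n, RG n (q n)) -> forall n, MG n (q (n - e) *: m).
  by move=> q Gq n; have := HMZ _ _ _ _ (Gq (n - e)) Hm; rewrite subrK.
have Ann : forall r, r *: m = 0 -> P r.
  move=> r rm; have [u [q [uu Gq Er]]] := decR r.
  have Esum : \sum_(n <- [seq j + e | j <- u]) q (n - e) *: m = \sum_(n <- (nil : seq int)) (fun _ => 0 : M) n.
    by rewrite big_nil -(scale_decomp _ _ _ e) -Er.
  have D := decomp_unique HMg (map_shift_uniq e uu) (isT : uniq (nil : seq int)) (Gqm q Gq) (fun n => gr0 HMg n) Esum.
  rewrite Er; apply: sum_ind => // j ju.
  apply: NNPP => nP; apply: nt; exists (q j); split; first by split => //; exists j.
  have := D (j + e); rewrite addrK (map_f (fun j => j + e) ju) //.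
have iRs : forall r1 r2, r1 *: m = r2 *: m -> i (r1 * s) = i (r2 * s).
  move=> r1 r2 E12.
  have : P ((r1 - r2) * s).
    by rewrite mulrC; apply: PM; apply: Ann; rewrite scalerBl E12 subrr.
  move/iker => H; by rewrite -[r1 * s](subrK (r2 * s)) (iD ilin) -mulrBl H add0r.
pose A := {x : M | pRm m x}.
have exr : forall x : A, exists r, val x = r *: m by move=> x; have /asboolP := valP x.
pose g (x : A) : E := i (epsilon (inhabits 0) (fun r => val x = r *: m) * s).
have gspec : forall (x : A) r, val x = r *: m -> g x = i (r * s).
  move=> x r xr; apply: iRs; rewrite -xr.
  by symmetry; apply: (epsilon_spec (inhabits 0) (fun r => val x = r *: m)); apply: exr.
pose AG := fun n (x : A) => MG n (val x).
have HA : graded_module RG AG.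
  split; last by move=> k n a x Ga Gx; apply: HMZ.
  split.
  - move=> n; split; first exact: (gr0 HMg n).
    by move=> x y Gx Gy; exact: (grB HMg Gx Gy).
  - move=> x; have [r xr] := exr x; have [u [q [uu Gq Er]]] := decR r.
    exists [seq j + e | j <- u], (fun n => mkA m (q (n - e))); split.
    + exact: map_shift_uniq.
    + by move=> n; apply: Gqm.
    + by apply: val_inj; rewrite val_sum xr Er (scale_decomp _ _ _ e).
  - move=> s0 f us Gf S0 n ns.
    apply: val_inj => /=.
    have S0' : \sum_(k <- s0) val (f k) = \sum_(k <- (nil : seq int)) (fun _ => 0 : M) k.
      by rewrite big_nil -val_sum S0.
    by have := decomp_unique HMg us (isT : uniq (nil : seq int)) Gf (fun n => gr0 HMg n) S0' n; rewrite ns.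
have hj : gr_hom AG MG val by split.
have hg : gr_hom AG EG g.
  split.
    move=> a u v; have [ru ur] := exr u; have [rv vr] := exr v.
    rewrite (gspec u ru ur) (gspec v rv vr) (gspec _ (a * ru + rv)).
      by rewrite mulrDl -mulrA ilin.
    by rewrite /= ur vr scalerDl scalerA.
  move=> n x; rewrite /AG => Gx.
  have [r xr] := exr x; have [u [q [uu Gq Er]]] := decR r.
  have Esum : \sum_(k <- [seq j + e | j <- u]) q (k - e) *: m = \sum_(k <- [:: n]) (fun k => if k == n then val x else 0) k.
    by rewrite big_seq1 eqxx xr Er (scale_decomp _ _ _ e).
  have Gf2 : forall k, MG k (if k == n then val x else 0).
    by move=> k; case: eqP => [->|_] //; exact: (gr0 HMg k).
  have := decomp_unique HMg (map_shift_uniq e uu) (isT : uniq [:: n]) (Gqm q Gq) Gf2 Esum n.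
  rewrite mem_seq1 eqxx.
  case: ifP => _ Eq.
    rewrite (gspec x (q (n - e))) -?Eq //.
    by apply: ideg; have := HRM _ _ _ _ (Gq (n - e)) Gs; rewrite subrK.
  rewrite (gspec x 0) ?mul0r; first by apply: ideg; have := HR1; have := HRM _ _ _ _ (gr0 HRg (n - e)) Gs; rewrite subrK mul0r.
  by rewrite scale0r Eq.
have [h [hh hv]] := Einj A M AG MG val g HA HM' hj val_inj hg.
have := hv (mkA m 1); rewrite (gspec _ 1) //= mul1r scale1r (H0 h hh m).
by move=> /esym /iker; case: Ss.
Qed.

Theorem mainTheorem8 (R : comNzRingType) (RG : int -> R -> Prop)
  (HR : graded_ring RG) (P : R -> Prop) (HP : homogeneous_prime RG P)
  (M : lmodType R) (MG : int -> M -> Prop) (HM : graded_module RG MG)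
  (E : lmodType R) (EG : int -> E -> Prop) (HE : graded_module RG EG)
  (i : R -> E) (Hi : gr_envelope_of_quot RG P EG i) :
  loc0_zero RG P MG <->
  (forall h : M -> E, gr_hom MG EG h -> forall x, h x = 0).
Proof.
split; [exact: (dir1 HR HP HM HE Hi) | exact: (dir2 HR HP HM HE Hi)].
Qed.
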